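(* Let $P^0\in L\cap\Delta^{n-1}_+$ satisfy $\bigl(P^0+\mathbf{Q}(P^0,P^* )\bigr)\cap L=\{P^0\}$. Then there exists a strictly convex function $h$ on $(0,\infty)$ such that $P^0$ minimizes the $f$-divergence $H_h(P\|P^* )=\sum_i p^*_i\,h(p_i/p^*_i)$ over $L\cap\Delta^{n-1}_+$. Conversely, if $P^0\in L\cap\Delta^{n-1}_+$ is a minimizer over $L\cap\Delta^{n-1}_+$ of $H_h(\cdot\|P^* )$ for some strictly convex differentiable $h$ on $(0,\infty)$, then $\bigl(P^0+\mathbf{Q}(P^0,P^* )\bigr)\cap L=\{P^0\}$.
   Context: Fix $n\ge 2$ and a positive equilibrium distribution $P^*=(p^*_i)$, $p^*_i>0$, $\sum_i p^*_i=1$. Let $\Delta^{n-1}_+=\{P\in\mathbb{R}^n: p_i>0,\ \sum_i p_i=1\}$. For $i\neq j$ let $\gamma^{ji}\in\mathbb{R}^n$ be the vector with $\gamma^{ji}_j=-1$, $\gamma^{ji}_i=1$, other coordinates $0$; ${\rm cone}$ denotes the set of non-negative linear combinations; ${\rm sign}$ is the three-valued sign function; $$\mathbf{Q}(P,P^* )={\rm cone}\Bigl\{\gamma^{ji}\,{\rm sign}\Bigl(\tfrac{p_j}{p^*_j}-\tfrac{p_i}{p^*_i}\Bigr)\ :\ 1\le j<i\le n\Bigr\}.$$ The condition manifold is $L=\{P\in\mathbb{R}^n:\ \sum_j m_{rj}p_j=M_r,\ r=0,\dots,k\}$ for a real $(k+1)\times n$ matrix $(m_{rj})$ with $m_{0j}=1$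 for all $j$, $M_0=1$; assume $L\cap\Delta^{n-1}_+\neq\emptyset$. *)

(* Defs.v *)
From Stdlib Require Import Reals Lra Lia.
Open Scope R_scope.

(* Vectors of R^n are represented as functions nat -> R, only indices < n matter. *)

Fixpoint sumR (n : nat) (f : nat -> R) : R :=
  match n with
  | O => 0
  | S k => sumR k f + f k
  end.

Definition sgn (x : R) : R :=
  if Rlt_dec 0 x then 1 else if Rlt_dec x 0 then -1 else 0.

Definition in_simplex (n : nat) (p : nat -> R) : Prop :=
  (forall i, (i < n)%nat -> 0 < p i) /\ sumR n p = 1.

Definition in_L (n k : nat) (m : nat -> nat -> R) (M : nat -> R) (p : nat -> R) : Prop :=
  forall r, (r <= k)%nat -> sumR n (fun j => m r j * p j) = M r.

Definition gamma (j i : nat) (l : nat) : R :=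
  (if Nat.eq_dec l i then 1 else 0) - (if Nat.eq_dec l j then 1 else 0).

(* v belongs to Q(P,Pstar) = cone{ gamma^{ji} sign(p_j/p*_j - p_i/p*_i) : 1<=j<i<=n }
   (0-based indices: j < i < n), i.e. v is a nonnegative combination of these generators *)
Definition in_Q (n : nat) (p ps : nat -> R) (v : nat -> R) : Prop :=
  exists c : nat -> nat -> R,
    (forall j i, (j < i)%nat -> (i < n)%nat -> 0 <= c j i) /\
    forall l, (l < n)%nat ->
      v l = sumR n (fun i => sumR i (fun j =>
              c j i * sgn (p j / ps j - p i / ps i) * gamma j i l)).

(* (P0 + Q(P0,Pstar)) ∩ L = {P0}; P0 itself lies in it (v = 0), so only the
   inclusion in {P0} is stated *)
Definition Q_cond (n k : nat) (m : nat -> nat -> R) (M : nat -> R)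
    (ps p0 : nat -> R) : Prop :=
  forall x : nat -> R,
    (exists v, in_Q n p0 ps v /\ forall l, (l < n)%nat -> x l = p0 l + v l) ->
    in_L n k m M x ->
    forall l, (l < n)%nat -> x l = p0 l.

Definition strictly_convex_pos (h : R -> R) : Prop :=
  forall x y t, 0 < x -> 0 < y -> x <> y -> 0 < t < 1 ->
    h (t * x + (1 - t) * y) < t * h x + (1 - t) * h y.

Definition differentiable_pos (h : R -> R) : Prop :=
  forall x, 0 < x -> exists l, derivable_pt_lim h x l.

Definition Hdiv (n : nat) (h : R -> R) (p ps : nat -> R) : R :=
  sumR n (fun i => ps i * h (p i / ps i)).

Definition is_minimizer (n k : nat) (m : nat -> nat -> R) (M : nat -> R)
    (h : R -> R) (ps p0 : nat -> R) : Prop :=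
  forall p, in_L n k m M p -> in_simplex n p -> Hdiv n h p0 ps <= Hdiv n h p ps.

(* Main.v *)
Require Import Defs.
From Stdlib Require Import Reals.
From Stdlib Require Import Lra Lia List Psatz.
Open Scope R_scope.

Lemma sumR_ext n f g : (forall i, (i < n)%nat -> f i = g i) -> sumR n f = sumR n g.
Proof. induction n; simpl; intros H; auto. rewrite IHn by (intros; apply H; lia). rewrite H by lia; auto. Qed.

Lemma sumR_plus n f g : sumR n (fun i => f i + g i) = sumR n f + sumR n g.
Proof. induction n; simpl; [lra|]. rewrite IHn; lra. Qed.

Lemma sumR_minus n f g : sumR n (fun i => f i - g i) = sumR n f - sumR n g.
Proof. induction n; simpl; [lra|]. rewrite IHn; lra. Qed.

Lemma sumR_scal n c f : sumR n (fun i => c * f i) = c * sumR n f.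
Proof. induction n; simpl; [lra|]. rewrite IHn; lra. Qed.

Lemma sumR_zero n f : (forall i, (i < n)%nat -> f i = 0) -> sumR n f = 0.
Proof. intros H; rewrite (sumR_ext n f (fun _ => 0)) by auto. induction n; simpl; auto. rewrite IHn; [lra|]. intros; apply H; lia. Qed.

Lemma sumR_le n f g : (forall i, (i < n)%nat -> f i <= g i) -> sumR n f <= sumR n g.
Proof. induction n; simpl; intros H; [lra|]. assert (f n <= g n) by (apply H; lia).
  assert (sumR n f <= sumR n g) by (apply IHn; intros; apply H; lia). lra. Qed.

Lemma sumR_swap n p f : sumR n (fun i => sumR p (fun j => f i j)) = sumR p (fun j => sumR n (fun i => f i j)).
Proof. induction n; simpl. - symmetry; apply sumR_zero; auto. - rewrite IHn, <- sumR_plus. auto. Qed.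

Lemma sumR_pick n f k : (k < n)%nat -> (forall l, (l < n)%nat -> l <> k -> f l = 0) -> sumR n f = f k.
Proof.
  induction n; intros Hk H; [lia|]. simpl.
  destruct (Nat.eq_dec k n).
  - subst. rewrite sumR_zero; [lra|]. intros; apply H; lia.
  - rewrite IHn by (lia || (intros; apply H; lia)). rewrite (H n) by lia. lra.
Qed.

Lemma sumR_gamma n f j i : (j < n)%nat -> (i < n)%nat ->
  sumR n (fun l => f l * gamma j i l) = f i - f j.
Proof.
  intros Hj Hi. unfold gamma.
  rewrite (sumR_ext n _ (fun l => f l * (if Nat.eq_dec l i then 1 else 0) - f l * (if Nat.eq_dec l j then 1 else 0))) by (intros; ring).
  rewrite sumR_minus. rewrite (sumR_pick n _ i), (sumR_pick n (fun l => f l * (if Nat.eq_dec l j then 1 else 0)) j); auto.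
  - destruct (Nat.eq_dec i i), (Nat.eq_dec j j); try congruence; ring.
  - intros l _ H; destruct (Nat.eq_dec l j); [congruence|ring].
  - intros l _ H; destruct (Nat.eq_dec l i); [congruence|ring].
Qed.

Lemma sumR_nonpos n f : (forall i, (i < n)%nat -> f i <= 0) -> sumR n f < 0 \/ (forall i, (i < n)%nat -> f i = 0).
Proof.
  induction n; simpl; intros H; [right; intros; lia|].
  destruct IHn as [H1|H1]; [intros; apply H; lia| |].
  - left. assert (f n <= 0) by (apply H; lia). lra.
  - assert (f n <= 0) by (apply H; lia). destruct (Rle_lt_or_eq_dec _ _ H0).
    + left. rewrite sumR_zero by auto. lra.
    + right. intros i Hi. destruct (Nat.eq_dec i n); [subst; auto|apply H1; lia].
Qed.

Lemma small_common n (P : nat -> R -> Prop) :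
  (forall i, (i < n)%nat -> exists d, 0 < d /\ forall t, 0 < t -> t <= d -> P i t) ->
  exists d, 0 < d /\ forall i, (i < n)%nat -> forall t, 0 < t -> t <= d -> P i t.
Proof.
  induction n; intros H.
  - exists 1; split; [lra|]; intros; lia.
  - destruct IHn as [d1 [Hd1 H1]]; [intros; apply H; lia|].
    destruct (H n) as [d2 [Hd2 H2]]; [lia|].
    exists (Rmin d1 d2); split; [apply Rmin_glb_lt; auto|].
    intros i Hi t Ht Htd. destruct (Nat.eq_dec i n).
    + subst; apply H2; auto. eapply Rle_trans; [exact Htd|apply Rmin_r].
    + apply H1; [lia|auto|]. eapply Rle_trans; [exact Htd|apply Rmin_l].
Qed.

Lemma fin_choice n (P : nat -> R -> Prop) :
  (forall i, (i < n)%nat -> exists y, P i y) -> exists f, forall i, (i < n)%nat -> P i (f i).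
Proof.
  induction n; intros H.
  - exists (fun _ => 0); intros; lia.
  - destruct IHn as [f Hf]; [intros; apply H; lia|].
    destruct (H n) as [y Hy]; [lia|].
    exists (fun i => if Nat.eq_dec i n then y else f i). intros i Hi.
    destruct (Nat.eq_dec i n); [subst; auto|apply Hf; lia].
Qed.

Lemma sgn_pos x : 0 < x -> sgn x = 1.
Proof. unfold sgn; destruct (Rlt_dec 0 x); [auto|lra]. Qed.
Lemma sgn_neg x : x < 0 -> sgn x = -1.
Proof. unfold sgn; destruct (Rlt_dec 0 x); [lra|]. destruct (Rlt_dec x 0); [auto|lra]. Qed.
Lemma sgn_zero : sgn 0 = 0.
Proof. unfold sgn; destruct (Rlt_dec 0 0); [lra|]. destruct (Rlt_dec 0 0); [lra|auto]. Qed.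

Definition vadd (u w : nat -> R) : nat -> R := fun l => u l + w l.
Definition vscal (t : R) (u : nat -> R) : nat -> R := fun l => t * u l.
Definition dot d (a u : nat -> R) := sumR d (fun l => a l * u l).

Inductive NC (zs : list (nat -> R)) : (nat -> R) -> Prop :=
| NC_in : forall z, In z zs -> NC zs z
| NC_add : forall u w, NC zs u -> NC zs w -> NC zs (vadd u w)
| NC_scal : forall t u, 0 < t -> NC zs u -> NC zs (vscal t u).

Lemma NC_mono zs1 zs2 w : (forall z, In z zs1 -> NC zs2 z) -> NC zs1 w -> NC zs2 w.
Proof. intros H Hw; induction Hw; [auto|apply NC_add|apply NC_scal]; auto. Qed.

Lemma NC_coord zs d w : (forall z, In z zs -> z d = 0) -> NC zs w -> w d = 0.
Proof. intros H Hw; induction Hw; unfold vadd, vscal; [auto| rewrite IHHw1, IHHw2; lra | rewrite IHHw; lra]. Qed.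

Lemma list_max a0 A : exists x, In x (a0 :: A) /\ forall a, In a (a0 :: A) -> a <= x.
Proof.
  revert a0; induction A as [|a1 A IH]; intros a0.
  - exists a0; split; [left; auto|]. intros a [H|[]]; subst; lra.
  - destruct (IH a1) as [x [Hx Hm]]. exists (Rmax a0 x). split.
    + unfold Rmax; destruct (Rle_dec a0 x); [right; auto|left; auto].
    + intros a [H|H]; [subst; apply Rmax_l|]. eapply Rle_trans; [apply Hm; auto|apply Rmax_r].
Qed.

Lemma list_min a0 A : exists x, In x (a0 :: A) /\ forall a, In a (a0 :: A) -> x <= a.
Proof.
  destruct (list_max (- a0) (map Ropp A)) as [x [Hx Hm]].
  exists (- x). split.
  - destruct Hx as [H|H]; [left; lra|]. right. apply in_map_iff in H. destruct H as [y [<- Hy]].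
    replace (- - y) with y by ring; auto.
  - intros a Ha. assert (In (-a) (-a0 :: map Ropp A)).
    { destruct Ha as [H|H]; [left; subst; auto|right; apply in_map; auto]. }
    specialize (Hm _ H). lra.
Qed.

Lemma sep_lists (A B : list R) : (forall a b, In a A -> In b B -> a < b) ->
  exists t, (forall a, In a A -> a < t) /\ (forall b, In b B -> t < b).
Proof.
  intros H. destruct A as [|a0 A]; destruct B as [|b0 B].
  - exists 0; split; intros ? [].
  - destruct (list_min b0 B) as [y [Hy Hm]]. exists (y - 1). split; [intros ? []|].
    intros b Hb; specialize (Hm b Hb); lra.
  - destruct (list_max a0 A) as [x [Hx Hm]]. exists (x + 1). split; [|intros ? []].
    intros a Ha; specialize (Hm a Ha); lra.
  - destruct (list_max a0 A) as [x [Hx Hmx]]. destruct (list_min b0 B) as [y [Hy Hmy]].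
    assert (x < y) by (apply H; auto).
    exists ((x + y) / 2). split.
    + intros a Ha; specialize (Hmx a Ha); lra.
    + intros b Hb; specialize (Hmy b Hb); lra.
Qed.

Lemma choose_t (Pl Nl : list (nat -> R)) (D c : (nat -> R) -> R) :
  (forall p, In p Pl -> 0 < c p) -> (forall q, In q Nl -> c q < 0) ->
  (forall p q, In p Pl -> In q Nl -> 0 < (- c q) * D p + c p * D q) ->
  exists t, (forall p, In p Pl -> 0 < D p + t * c p) /\ (forall q, In q Nl -> 0 < D q + t * c q).
Proof.
  intros HP HN Hpq.
  destruct (sep_lists (map (fun p => - D p / c p) Pl) (map (fun q => D q / (- c q)) Nl)) as [t [H1 H2]].
  - intros a b Ha Hb. apply in_map_iff in Ha, Hb. destruct Ha as [p [<- Hp]]. destruct Hb as [q [<- Hq]].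
    specialize (HP p Hp); specialize (HN q Hq); specialize (Hpq p q Hp Hq).
    apply (Rmult_lt_reg_r (c p * - c q)); [nra|].
    replace (- D p / c p * (c p * - c q)) with (- D p * - c q) by (field; lra).
    replace (D q / - c q * (c p * - c q)) with (D q * c p) by (field; lra). nra.
  - exists t. split.
    + intros p Hp. specialize (HP p Hp). specialize (H1 _ (in_map (fun p => - D p / c p) _ _ Hp)).
      simpl in H1. assert (- D p < t * c p).
      { replace (- D p) with ((- D p / c p) * c p) by (field; lra). apply Rmult_lt_compat_r; auto. }
      lra.
    + intros q Hq. specialize (HN q Hq). specialize (H2 _ (in_map (fun q => D q / - c q) _ _ Hq)).
      simpl in H2. assert (t * (- c q) < D q).
      { assert (Hx := Rmult_lt_compat_r (- c q) _ _ ltac:(lra) H2).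
        replace (D q / - c q * - c q) with (D q) in Hx by (field; lra). exact Hx. }
      lra.
Qed.

Definition isb (P : Prop) (d : {P} + {~P}) : bool := if d then true else false.

Theorem gordan d : forall zs, (forall w, NC zs w -> ~ (forall l, (l < d)%nat -> w l = 0)) ->
  exists lam, forall z, In z zs -> 0 < dot d lam z.
Proof.
  induction d as [|d IH]; intros zs Hzs.
  - exists (fun _ => 0). intros z Hz. exfalso. apply (Hzs z (NC_in _ _ Hz)). intros; lia.
  - set (Zl := filter (fun z => isb _ (Req_dec_T (z d) 0)) zs).
    set (Pl := filter (fun z => isb _ (Rlt_dec 0 (z d))) zs).
    set (Nl := filter (fun z => isb _ (Rlt_dec (z d) 0)) zs).
    set (comb := fun p q : nat -> R => vadd (vscal (- q d) p) (vscal (p d) q)).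
    set (Rl := Zl ++ flat_map (fun p => map (fun q => comb p q) Nl) Pl).
    assert (HZ : forall z, In z Zl <-> In z zs /\ z d = 0).
    { intros z; unfold Zl; rewrite filter_In; unfold isb; destruct (Req_dec_T (z d) 0); intuition congruence. }
    assert (HP : forall z, In z Pl <-> In z zs /\ 0 < z d).
    { intros z; unfold Pl; rewrite filter_In; unfold isb; destruct (Rlt_dec 0 (z d)); intuition congruence. }
    assert (HN : forall z, In z Nl <-> In z zs /\ z d < 0).
    { intros z; unfold Nl; rewrite filter_In; unfold isb; destruct (Rlt_dec (z d) 0); intuition congruence. }
    assert (HR : forall u, In u Rl -> NC zs u /\ u d = 0).
    { intros u Hu. unfold Rl in Hu. apply in_app_or in Hu. destruct Hu as [Hu|Hu].
      - apply HZ in Hu. destruct Hu; split; [apply NC_in|]; auto.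
      - apply in_flat_map in Hu. destruct Hu as [p [Hp Hu]]. apply in_map_iff in Hu.
        destruct Hu as [q [<- Hq]]. apply HP in Hp; apply HN in Hq.
        split.
        + unfold comb. apply NC_add; apply NC_scal; try (apply NC_in); tauto || lra.
        + unfold comb, vadd, vscal. ring. }
    destruct (IH Rl) as [lam' Hlam'].
    { intros w Hw Hw0. apply (Hzs w).
      - eapply NC_mono; [|exact Hw]. intros; apply HR; auto.
      - assert (w d = 0) by (eapply NC_coord; [|exact Hw]; intros; apply HR; auto).
        intros l Hl. destruct (Nat.eq_dec l d); [subst; auto|apply Hw0; lia]. }
    destruct (choose_t Pl Nl (fun z => dot d lam' z) (fun z => z d)) as [t [Ht1 Ht2]].
    { intros p Hp; apply HP; auto. }
    { intros q Hq; apply HN; auto. }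
    { intros p q Hp Hq.
      assert (Hin : In (comb p q) Rl).
      { unfold Rl. apply in_or_app; right. apply in_flat_map. exists p; split; auto. apply in_map; auto. }
      specialize (Hlam' _ Hin). unfold dot, comb, vadd, vscal in Hlam'.
      rewrite (sumR_ext _ _ (fun l => (- q d) * (lam' l * p l) + p d * (lam' l * q l))) in Hlam' by (intros; ring).
      rewrite sumR_plus, !sumR_scal in Hlam'. unfold dot. lra. }
    exists (fun l => if Nat.eq_dec l d then t else lam' l).
    assert (Hdot : forall z, dot (S d) (fun l => if Nat.eq_dec l d then t else lam' l) z = dot d lam' z + t * z d).
    { intros z. unfold dot. simpl. destruct (Nat.eq_dec d d); [|congruence].
      rewrite (sumR_ext d _ (fun l => lam' l * z l)); [auto|].
      intros i Hi; destruct (Nat.eq_dec i d); [lia|auto]. }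
    intros z Hz. rewrite Hdot.
    destruct (total_order_T (z d) 0) as [[H|H]|H].
    + apply Ht2, HN; auto.
    + assert (In z Rl) by (unfold Rl; apply in_or_app; left; apply HZ; auto).
      specialize (Hlam' z H0). rewrite H; lra.
    + apply Ht1, HP; auto.
Qed.

Definition convexR (f : R -> R) := forall x y t, 0 <= t <= 1 -> f (t * x + (1 - t) * y) <= t * f x + (1 - t) * f y.

Lemma lexmax n (r a : nat -> R) : exists m, (m <= n)%nat /\ forall i, (i <= n)%nat -> r i < r m \/ (r i = r m /\ a i <= a m).
Proof.
  induction n.
  - exists 0%nat; split; auto. intros i Hi; assert (i = 0%nat) by lia; subst; right; lra.
  - destruct IHn as [m [Hm H]].
    destruct (total_order_T (r (S n)) (r m)) as [[H1|H1]|H1].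
    + exists m; split; [lia|]. intros i Hi. destruct (Nat.eq_dec i (S n)); [subst; left; auto|apply H; lia].
    + destruct (Rle_dec (a (S n)) (a m)).
      * exists m; split; [lia|]. intros i Hi. destruct (Nat.eq_dec i (S n)); [subst; right; auto|apply H; lia].
      * exists (S n); split; [lia|]. intros i Hi. destruct (Nat.eq_dec i (S n)); [subst; right; lra|].
        destruct (H i ltac:(lia)) as [H2|[H2 H3]]; [left; lra|right; split; lra].
    + exists (S n); split; [lia|]. intros i Hi. destruct (Nat.eq_dec i (S n)); [subst; right; lra|].
      destruct (H i ltac:(lia)) as [H2|[H2 H3]]; left; lra.
Qed.

Lemma interp n : forall (r a : nat -> R) B,
  (forall i j, (i < n)%nat -> (j < n)%nat -> r i < r j -> a i <= a j) ->
  (forall i, (i < n)%nat -> a i <= B) ->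
  exists f, convexR f /\ (forall i, (i < n)%nat -> forall y, f (r i) + a i * (y - r i) <= f y) /\
    (forall x y, x <= y -> f y - f x <= B * (y - x)).
Proof.
  induction n; intros r a B Hco HB.
  - exists (fun y => B * y). split; [|split].
    + intros x y t _. lra.
    + intros; lia.
    + intros; lra.
  - destruct (lexmax n r a) as [m [Hm Hmax]].
    set (sw := fun i => if Nat.eq_dec i m then n else if Nat.eq_dec i n then m else i).
    assert (Hsw : forall i, (i < n)%nat -> (sw i <= n)%nat).
    { intros i Hi; unfold sw; destruct (Nat.eq_dec i m); [lia|]; destruct (Nat.eq_dec i n); lia. }
    assert (Hle : forall i, (i <= n)%nat -> a i <= a m).
    { intros i Hi. destruct (Hmax i Hi) as [H|[_ H]]; auto. apply Hco; auto; lia. }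
    destruct (IHn (fun i => r (sw i)) (fun i => a (sw i)) (a m)) as [f [Hcv [Hsub Hsl]]].
    { intros i j Hi Hj H. apply Hco; auto; apply Hsw in Hi; apply Hsw in Hj; lia. }
    { intros i Hi. apply Hle, Hsw; auto. }
    exists (fun y => Rmax (f y) (f (r m) + a m * (y - r m))).
    assert (Hrm : Rmax (f (r m)) (f (r m) + a m * (r m - r m)) = f (r m)).
    { apply Rmax_left. lra. }
    split; [|split].
    + intros x y t Ht. apply Rmax_lub.
      * eapply Rle_trans; [apply Hcv; auto|].
        assert (f x <= Rmax (f x) (f (r m) + a m * (x - r m))) by apply Rmax_l.
        assert (f y <= Rmax (f y) (f (r m) + a m * (y - r m))) by apply Rmax_l. nra.
      * assert (f (r m) + a m * (x - r m) <= Rmax (f x) (f (r m) + a m * (x - r m))) by apply Rmax_r.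
        assert (f (r m) + a m * (y - r m) <= Rmax (f y) (f (r m) + a m * (y - r m))) by apply Rmax_r. nra.
    + intros i Hi y. destruct (Nat.eq_dec i m).
      * subst i. rewrite Hrm. eapply Rle_trans; [|apply Rmax_r]. lra.
      * assert (Hj : exists j, (j < n)%nat /\ sw j = i).
        { destruct (Nat.eq_dec i n).
          - exists m. split; [lia|]. unfold sw. destruct (Nat.eq_dec m m); congruence.
          - exists i. split; [lia|]. unfold sw. destruct (Nat.eq_dec i m); [congruence|]. destruct (Nat.eq_dec i n); congruence. }
        destruct Hj as [j [Hj Hji]]. specialize (Hsub j Hj y). rewrite Hji in Hsub. simpl in Hsub.
        assert (Hri : r i <= r m) by (destruct (Hmax i ltac:(lia)) as [H|[H _]]; lra).
        specialize (Hsl _ _ Hri).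
        rewrite Rmax_left by lra. eapply Rle_trans; [exact Hsub|apply Rmax_l].
    + intros x y Hxy. assert (Ham : a m <= B) by (apply HB; lia).
      assert (f x <= Rmax (f x) (f (r m) + a m * (x - r m))) by apply Rmax_l.
      assert (f (r m) + a m * (x - r m) <= Rmax (f x) (f (r m) + a m * (x - r m))) by apply Rmax_r.
      specialize (Hsl _ _ Hxy).
      assert (a m * (y - x) <= B * (y - x)) by (apply Rmult_le_compat_r; lra).
      assert (Rmax (f y) (f (r m) + a m * (y - r m)) <= Rmax (f x) (f (r m) + a m * (x - r m)) + B * (y - x)).
      { apply Rmax_lub; lra. }
      lra.
Qed.

Lemma deriv_le_slope h a b la : strictly_convex_pos h -> 0 < a -> a < b -> derivable_pt_lim h a la ->
  la <= (h b - h a) / (b - a).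
Proof.
  intros Hc Ha Hab Hd. destruct (Rle_dec la ((h b - h a) / (b - a))) as [|Hn]; auto. exfalso.
  set (s := (h b - h a) / (b - a)). assert (Hgt : s < la) by (unfold s; lra).
  destruct (Hd (la - s)) as [del Hdel]; [lra|].
  set (e := Rmin (del / 2) ((b - a) / 2)).
  assert (He0 : 0 < e) by (unfold e; apply Rmin_glb_lt; destruct del; simpl; lra).
  assert (He1 : e < del) by (unfold e; eapply Rle_lt_trans; [apply Rmin_l|]; destruct del; simpl; lra).
  assert (He2 : e < b - a) by (unfold e; eapply Rle_lt_trans; [apply Rmin_r|]; lra).
  specialize (Hdel e ltac:(lra) ltac:(rewrite Rabs_right; lra)).
  set (t := e / (b - a)).
  assert (Ht : 0 < t < 1) by (unfold t; split; [apply Rdiv_lt_0_compat; lra|apply (Rmult_lt_reg_r (b - a)); [lra|]; field_simplify; lra]).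
  assert (Hx : t * b + (1 - t) * a = a + e) by (unfold t; field; lra).
  specialize (Hc b a t ltac:(lra) Ha ltac:(lra) Ht). rewrite Hx in Hc.
  assert (Hq : (h (a + e) - h a) / e < s).
  { apply (Rmult_lt_reg_r e); [lra|]. unfold s.
    replace ((h (a + e) - h a) / e * e) with (h (a + e) - h a) by (field; lra).
    replace ((h b - h a) / (b - a) * e) with (t * (h b - h a)) by (unfold t; field; lra). lra. }
  apply Rabs_def2 in Hdel. lra.
Qed.

Lemma slope_le_deriv h a b lb : strictly_convex_pos h -> 0 < a -> a < b -> derivable_pt_lim h b lb ->
  (h b - h a) / (b - a) <= lb.
Proof.
  intros Hc Ha Hab Hd. destruct (Rle_dec ((h b - h a) / (b - a)) lb) as [|Hn]; auto. exfalso.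
  set (s := (h b - h a) / (b - a)). assert (Hgt : lb < s) by (unfold s; lra).
  destruct (Hd (s - lb)) as [del Hdel]; [lra|].
  set (e := Rmin (del / 2) ((b - a) / 2)).
  assert (He0 : 0 < e) by (unfold e; apply Rmin_glb_lt; destruct del; simpl; lra).
  assert (He1 : e < del) by (unfold e; eapply Rle_lt_trans; [apply Rmin_l|]; destruct del; simpl; lra).
  assert (He2 : e < b - a) by (unfold e; eapply Rle_lt_trans; [apply Rmin_r|]; lra).
  specialize (Hdel (- e) ltac:(lra) ltac:(rewrite Rabs_left; lra)).
  set (t := e / (b - a)).
  assert (Ht : 0 < t < 1) by (unfold t; split; [apply Rdiv_lt_0_compat; lra|apply (Rmult_lt_reg_r (b - a)); [lra|]; field_simplify; lra]).
  assert (Hx : t * a + (1 - t) * b = b + - e) by (unfold t; field; lra).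
  specialize (Hc a b t Ha ltac:(lra) ltac:(lra) Ht). rewrite Hx in Hc.
  assert (Hq : s < (h (b + - e) - h b) / - e).
  { apply (Rmult_lt_reg_r e); [lra|]. unfold s.
    replace ((h (b + - e) - h b) / - e * e) with (h b - h (b + - e)) by (field; lra).
    replace ((h b - h a) / (b - a) * e) with (t * (h b - h a)) by (unfold t; field; lra). lra. }
  apply Rabs_def2 in Hdel. lra.
Qed.

Lemma deriv_mono h a b la lb : strictly_convex_pos h -> 0 < a -> a < b ->
  derivable_pt_lim h a la -> derivable_pt_lim h b lb -> la < lb.
Proof.
  intros Hc Ha Hab Hda Hdb. set (c := (a + b) / 2).
  assert (H1 := deriv_le_slope h a c la Hc Ha ltac:(unfold c; lra) Hda).
  assert (H2 := slope_le_deriv h c b lb Hc ltac:(unfold c; lra) ltac:(unfold c; lra) Hdb).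
  assert (Hm := Hc a b (1/2) Ha ltac:(lra) ltac:(lra) ltac:(lra)).
  replace (1 / 2 * a + (1 - 1 / 2) * b) with c in Hm by (unfold c; field).
  assert ((h c - h a) / (c - a) < (h b - h c) / (b - c)).
  { replace (b - c) with (c - a) by (unfold c; field). apply Rmult_lt_compat_r.
    - apply Rinv_0_lt_compat; unfold c; lra.
    - lra. }
  lra.
Qed.

Lemma bound_exists n (f : nat -> R) : exists B, forall i, (i < n)%nat -> f i <= B.
Proof.
  induction n.
  - exists 0; intros; lia.
  - destruct IHn as [B HB]. exists (Rmax B (f n)). intros i Hi.
    destruct (Nat.eq_dec i n); [subst; apply Rmax_r|]. eapply Rle_trans; [apply HB; lia|apply Rmax_l].
Qed.

Lemma Q_add n p ps v1 v2 : in_Q n p ps v1 -> in_Q n p ps v2 -> in_Q n p ps (fun l => v1 l + v2 l).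
Proof.
  intros [c1 [Hc1 H1]] [c2 [Hc2 H2]]. exists (fun j i => c1 j i + c2 j i). split.
  - intros j i Hj Hi. specialize (Hc1 j i Hj Hi); specialize (Hc2 j i Hj Hi); lra.
  - intros l Hl. rewrite H1, H2 by auto. rewrite <- sumR_plus. apply sumR_ext; intros.
    rewrite <- sumR_plus. apply sumR_ext; intros. ring.
Qed.

Lemma Q_scal n p ps t v : 0 <= t -> in_Q n p ps v -> in_Q n p ps (fun l => t * v l).
Proof.
  intros Ht [c [Hc H]]. exists (fun j i => t * c j i). split.
  - intros j i Hj Hi. specialize (Hc j i Hj Hi); nra.
  - intros l Hl. rewrite H by auto. rewrite <- sumR_scal. apply sumR_ext; intros.
    rewrite <- sumR_scal. apply sumR_ext; intros. ring.
Qed.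

Definition allpairs n := flat_map (fun i => map (fun j => (j, i)) (seq 0 i)) (seq 0 n).

Lemma in_allpairs n j i : In (j, i) (allpairs n) <-> (j < i /\ i < n)%nat.
Proof.
  unfold allpairs. rewrite in_flat_map. split.
  - intros [x [Hx H]]. apply in_map_iff in H. destruct H as [y [Hy Hy']]. inversion Hy; subst.
    apply in_seq in Hx; apply in_seq in Hy'. lia.
  - intros [H1 H2]. exists i. split; [apply in_seq; lia|]. apply in_map_iff. exists j; split; auto. apply in_seq; lia.
Qed.

Lemma forward n ps k m M p0 : in_simplex n ps -> in_L n k m M p0 -> Q_cond n k m M ps p0 ->
  exists h, strictly_convex_pos h /\ is_minimizer n k m M h ps p0.
Proof.
  intros [Hps Hps1] HL HQ.
  set (r := fun i => p0 i / ps i).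
  set (pairs := filter (fun pr : nat * nat => if Req_dec_T (r (fst pr)) (r (snd pr)) then false else true) (allpairs n)).
  set (zfun := fun pr : nat * nat => fun r' => sgn (r (fst pr) - r (snd pr)) * (m r' (snd pr) - m r' (fst pr))).
  set (zs := map zfun pairs).
  assert (Hpairs : forall j i, In (j, i) pairs <-> ((j < i /\ i < n)%nat /\ r j <> r i)).
  { intros j i. unfold pairs. rewrite filter_In, in_allpairs. simpl.
    destruct (Req_dec_T (r j) (r i)); intuition congruence. }
  assert (HNC : forall w, NC zs w -> exists v, in_Q n p0 ps v /\
            (forall r', w r' = sumR n (fun l => m r' l * v l)) /\ sumR n (fun l => r l * v l) < 0).
  { intros w Hw. induction Hw as [z Hz|u w _ [v1 [Q1 [W1 P1]]] _ [v2 [Q2 [W2 P2]]]|t u Ht _ [v [Q [W P]]]].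
    - unfold zs in Hz. apply in_map_iff in Hz. destruct Hz as [[j i] [<- Hz]].
      apply Hpairs in Hz. destruct Hz as [[Hji Hin] Hr].
      exists (fun l => sgn (r j - r i) * gamma j i l). split; [|split].
      + exists (fun a b => if Nat.eq_dec a j then if Nat.eq_dec b i then 1 else 0 else 0). split.
        * intros a b _ _. destruct (Nat.eq_dec a j); [destruct (Nat.eq_dec b i)|]; lra.
        * intros l Hl. rewrite (sumR_pick n _ i); auto.
          -- rewrite (sumR_pick i _ j); auto.
             ++ destruct (Nat.eq_dec j j); [|congruence]. destruct (Nat.eq_dec i i); [|congruence]. unfold r; ring.
             ++ intros a _ Ha. destruct (Nat.eq_dec a j); [congruence|ring].
          -- intros b _ Hb. apply sumR_zero. intros a _. destruct (Nat.eq_dec a j); [destruct (Nat.eq_dec b i); [congruence|]|]; ring.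
      + intros r'. unfold zfun; simpl.
        rewrite (sumR_ext n _ (fun l => sgn (r j - r i) * (m r' l * gamma j i l))) by (intros; ring).
        rewrite sumR_scal, sumR_gamma by lia. auto.
      + rewrite (sumR_ext n _ (fun l => sgn (r j - r i) * (r l * gamma j i l))) by (intros; ring).
        rewrite sumR_scal, sumR_gamma by lia.
        destruct (total_order_T (r j) (r i)) as [[H|H]|H]; [|congruence|].
        * rewrite sgn_neg by lra. lra.
        * rewrite sgn_pos by lra. lra.
    - exists (fun l => v1 l + v2 l). split; [apply Q_add; auto|split].
      + intros r'. unfold vadd. rewrite W1, W2, <- sumR_plus. apply sumR_ext; intros; ring.
      + rewrite (sumR_ext n _ (fun l => r l * v1 l + r l * v2 l)) by (intros; ring). rewrite sumR_plus. lra.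
    - exists (fun l => t * v l). split; [apply Q_scal; auto; lra|split].
      + intros r'. unfold vscal. rewrite W, <- sumR_scal. apply sumR_ext; intros; ring.
      + rewrite (sumR_ext n _ (fun l => t * (r l * v l))) by (intros; ring). rewrite sumR_scal. nra. }
  destruct (gordan (S k) zs) as [lam Hlam].
  { intros w Hw H0. destruct (HNC w Hw) as [v [Qv [Wv Pv]]].
    assert (Hx : forall l, (l < n)%nat -> (fun l => p0 l + v l) l = p0 l).
    { apply HQ.
      - exists v; split; auto.
      - intros r' Hr'. rewrite (sumR_ext n _ (fun l => m r' l * p0 l + m r' l * v l)) by (intros; ring).
        rewrite sumR_plus, HL by auto. rewrite <- Wv, H0 by lia. ring. }
    rewrite sumR_zero in Pv; [lra|]. intros l Hl. specialize (Hx l Hl). simpl in Hx.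
    replace (v l) with 0 by lra. ring. }
  set (y := fun l => sumR (S k) (fun r' => lam r' * m r' l)).
  set (g := fun l => - y l).
  assert (Hkey : forall j i, (j < i)%nat -> (i < n)%nat -> r j <> r i -> 0 < sgn (r j - r i) * (y i - y j)).
  { intros j i Hji Hin Hr. assert (Hz : In (zfun (j, i)) zs) by (apply in_map, Hpairs; auto).
    specialize (Hlam _ Hz). unfold dot, zfun in Hlam; cbn [fst snd] in Hlam.
    rewrite (sumR_ext _ _ (fun r' => sgn (r j - r i) * (lam r' * m r' i - lam r' * m r' j))) in Hlam by (intros; ring).
    rewrite sumR_scal, sumR_minus in Hlam. exact Hlam. }
  assert (Hmono : forall i j, (i < n)%nat -> (j < n)%nat -> r i < r j -> g i < g j).
  { intros i j Hi Hj Hr. unfold g. destruct (Nat.lt_total i j) as [H|[H|H]].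
    - specialize (Hkey i j H Hj ltac:(lra)). rewrite sgn_neg in Hkey by lra. lra.
    - subst; lra.
    - specialize (Hkey j i H Hi ltac:(lra)). rewrite sgn_pos in Hkey by lra. lra. }
  destruct (small_common n (fun i t => forall j, (j < n)%nat -> r i < r j -> 2 * t * (r j - r i) <= g j - g i)) as [dl [Hdl Hdel]].
  { intros i Hi.
    destruct (small_common n (fun j t => r i < r j -> 2 * t * (r j - r i) <= g j - g i)) as [d0 [Hd0 Hd0']].
    2:{ exists d0; split; [auto|]. intros t Ht Htd j Hj. apply Hd0'; auto. }
    intros j Hj.
    destruct (Rlt_dec (r i) (r j)) as [Hr|Hr].
    - exists ((g j - g i) / (2 * (r j - r i))). split.
      + apply Rdiv_lt_0_compat; [specialize (Hmono i j Hi Hj Hr); lra|lra].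
      + intros t Ht Htd _. apply (Rmult_le_compat_r (2 * (r j - r i))) in Htd; [|lra].
        replace ((g j - g i) / (2 * (r j - r i)) * (2 * (r j - r i))) with (g j - g i) in Htd by (field; lra). lra.
    - exists 1. split; [lra|]. intros; contradiction. }
  set (a := fun i => g i - 2 * dl * r i).
  destruct (bound_exists n a) as [B HB].
  destruct (interp n r a B) as [phi [Hcv [Hsub _]]]; auto.
  { intros i j Hi Hj Hr. specialize (Hdel i Hi dl Hdl (Rle_refl _) j Hj Hr). unfold a. lra. }
  exists (fun x => phi x + dl * x * x). split.
  - intros x z t Hx Hz Hxz Ht. assert (H1 := Hcv x z t ltac:(lra)).
    assert (Hp : 0 < dl * (t * (1 - t)) * ((x - z) * (x - z))).
    { apply Rmult_lt_0_compat; [apply Rmult_lt_0_compat; [lra|nra]|].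
      assert (x - z <> 0) by lra. nra. }
    assert (Hid : t * (dl * x * x) + (1 - t) * (dl * z * z) - dl * (t * x + (1 - t) * z) * (t * x + (1 - t) * z)
                  = dl * (t * (1 - t)) * ((x - z) * (x - z))) by ring.
    lra.
  - intros p HpL [Hp Hp1]. unfold Hdiv.
    assert (Hpt : forall i, (i < n)%nat ->
      ps i * (phi (p0 i / ps i) + dl * (p0 i / ps i) * (p0 i / ps i)) + g i * (p i - p0 i)
        <= ps i * (phi (p i / ps i) + dl * (p i / ps i) * (p i / ps i))).
    { intros i Hi. specialize (Hps i Hi). specialize (Hsub i Hi (p i / ps i)). unfold a, r in Hsub.
      set (yy := p i / ps i) in *. set (ri := p0 i / ps i) in *.
      assert (Hsq : 0 <= dl * ((yy - ri) * (yy - ri))) by (apply Rmult_le_pos; [lra|apply Rle_0_sqr]).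
      assert (Hg : g i * (p i - p0 i) = ps i * (g i * (yy - ri))) by (unfold yy, ri; field; lra).
      rewrite Hg. rewrite <- Rmult_plus_distr_l. apply Rmult_le_compat_l; [lra|].
      assert (Hid : phi ri + dl * ri * ri + g i * (yy - ri) + dl * ((yy - ri) * (yy - ri))
                    = phi ri + (g i - 2 * dl * ri) * (yy - ri) + dl * yy * yy) by ring.
      lra. }
    assert (Hsum0 : sumR n (fun i => g i * (p i - p0 i)) = 0).
    { unfold g, y.
      rewrite (sumR_ext n _ (fun i => - sumR (S k) (fun r' => lam r' * (m r' i * p i - m r' i * p0 i)))).
      2:{ intros i Hi. rewrite (sumR_ext (S k) (fun r' => lam r' * (m r' i * p i - m r' i * p0 i))
             (fun r' => (p i - p0 i) * (lam r' * m r' i))) by (intros; ring).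
          rewrite sumR_scal. ring. }
      rewrite (sumR_ext n _ (fun i => -1 * sumR (S k) (fun r' => lam r' * (m r' i * p i - m r' i * p0 i)))) by (intros; ring).
      rewrite sumR_scal, sumR_swap.
      rewrite (sumR_zero (S k)); [ring|]. intros r' Hr'.
      rewrite sumR_scal, sumR_minus, HpL, HL by lia. ring. }
    apply sumR_le in Hpt. rewrite sumR_plus, Hsum0 in Hpt. lra.
Qed.

Lemma quot_bound q e d eps : e <> 0 -> Rabs (q / e - d) < eps -> q <= e * d + eps * Rabs e.
Proof.
  intros He H. assert (Hq : q - e * d = e * (q / e - d)) by (field; auto).
  assert (H1 : e * (q / e - d) <= Rabs e * Rabs (q / e - d)) by (rewrite <- Rabs_mult; apply Rle_abs).
  assert (H2 : Rabs e * Rabs (q / e - d) <= Rabs e * eps) by (apply Rmult_le_compat_l; [apply Rabs_pos|lra]).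
  lra.
Qed.

Lemma backward n ps k m M p0 : (forall j, (j < n)%nat -> m 0%nat j = 1) ->
  in_simplex n ps -> in_L n k m M p0 -> in_simplex n p0 ->
  (exists h : R -> R, strictly_convex_pos h /\ differentiable_pos h /\ is_minimizer n k m M h ps p0) ->
  Q_cond n k m M ps p0.
Proof.
  intros Hm0 [Hps Hps1] HL [Hp0 Hp01] [h [Hsc [Hdf Hmin]]].
  intros x [v [[c [Hc Hv]] Hxv]] HxL l Hl. rewrite Hxv by auto.
  destruct (Req_dec (v l) 0) as [E|Hne]; [rewrite E; ring|exfalso].
  set (r := fun i => p0 i / ps i).
  assert (Hr : forall i, (i < n)%nat -> 0 < r i).
  { intros i Hi; unfold r; apply Rdiv_lt_0_compat; auto. }
  destruct (fin_choice n (fun i y => derivable_pt_lim h (r i) y)) as [d Hd].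
  { intros i Hi. apply Hdf, Hr; auto. }
  assert (Hdm : forall i j, (i < n)%nat -> (j < n)%nat -> r i < r j -> d i < d j).
  { intros i j Hi Hj H. apply (deriv_mono h (r i) (r j)); auto. }
  set (term := fun b j => c j b * sgn (r j - r b) * (d b - d j)).
  assert (Hterm : forall b j, (b < n)%nat -> (j < b)%nat -> term b j <= 0).
  { intros b j Hb Hj. unfold term. assert (Hc0 := Hc j b Hj Hb).
    destruct (total_order_T (r j) (r b)) as [[H|H]|H].
    - rewrite sgn_neg by lra. assert (d j < d b) by (apply Hdm; auto; lia). nra.
    - rewrite H, Rminus_diag, sgn_zero. lra.
    - rewrite sgn_pos by lra. assert (d b < d j) by (apply Hdm; auto; lia). nra. }
  set (D := sumR n (fun a => d a * v a)).
  assert (HD : D = sumR n (fun b => sumR b (fun j => term b j))).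
  { unfold D.
    rewrite (sumR_ext n _ (fun a => sumR n (fun b => sumR b (fun j => c j b * sgn (r j - r b) * (d a * gamma j b a))))).
    2:{ intros a Ha. rewrite Hv by auto. rewrite <- sumR_scal. apply sumR_ext; intros.
        rewrite <- sumR_scal. apply sumR_ext; intros. unfold r; ring. }
    rewrite sumR_swap. apply sumR_ext. intros b Hb. rewrite sumR_swap. apply sumR_ext. intros j Hj.
    rewrite sumR_scal, sumR_gamma by lia. unfold term; ring. }
  assert (HDneg : D < 0).
  { rewrite HD. destruct (sumR_nonpos n (fun b => sumR b (fun j => term b j))) as [H|H]; auto.
    - intros b Hb. assert (Hz : sumR b (fun _ => 0) = 0) by (apply sumR_zero; auto).
      rewrite <- Hz. apply sumR_le. intros j Hj; apply Hterm; auto.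
    - exfalso. apply Hne. rewrite Hv by auto. apply sumR_zero. intros b Hb. apply sumR_zero. intros j Hj.
      assert (Ht0 : term b j = 0).
      { destruct (sumR_nonpos b (fun j => term b j)) as [H2|H2].
        - intros; apply Hterm; auto.
        - specialize (H b Hb). cbv beta in H. lra.
        - apply H2; auto. }
      unfold term in Ht0.
      destruct (Req_dec (r j) (r b)) as [E|E].
      + unfold r in E. rewrite E, Rminus_diag, sgn_zero. ring.
      + assert (d b - d j <> 0).
        { destruct (Rlt_dec (r j) (r b)).
          - assert (d j < d b) by (apply Hdm; auto; lia). lra.
          - assert (d b < d j) by (apply Hdm; auto; try lia; lra). lra. }
        apply Rmult_integral in Ht0. destruct Ht0 as [Ht0|Ht0]; [|contradiction].
        unfold r in Ht0. rewrite Ht0. ring. }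
  set (S := sumR n (fun a => Rabs (v a))).
  assert (HS : 0 <= S).
  { assert (Hz : sumR n (fun _ => 0) = 0) by (apply sumR_zero; auto).
    rewrite <- Hz. apply sumR_le. intros; apply Rabs_pos. }
  set (eps := - D / (2 * (S + 1))).
  assert (Heps : 0 < eps) by (unfold eps; apply Rdiv_lt_0_compat; lra).
  destruct (small_common n (fun i t => 0 < p0 i + t * v i /\
       ps i * (h ((p0 i + t * v i) / ps i) - h (r i)) <= t * (d i * v i) + (eps * t) * Rabs (v i))) as [t [Ht HP]].
  { intros i Hi. destruct (Hd i Hi eps Heps) as [del Hdel].
    assert (Hpsi := Hps i Hi). assert (Hp0i := Hp0 i Hi).
    assert (Hav := Rabs_pos (v i)).
    exists (Rmin (del * ps i / (Rabs (v i) + 1)) (p0 i / (Rabs (v i) + 1))). split.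
    { apply Rmin_glb_lt; apply Rdiv_lt_0_compat; try lra. destruct del; simpl; nra. }
    intros s Hs Hsd.
    assert (Hs1 : s * (Rabs (v i) + 1) <= del * ps i).
    { assert (s <= del * ps i / (Rabs (v i) + 1)) by (eapply Rle_trans; [exact Hsd|apply Rmin_l]).
      apply (Rmult_le_compat_r (Rabs (v i) + 1)) in H; [|lra].
      replace (del * ps i / (Rabs (v i) + 1) * (Rabs (v i) + 1)) with (del * ps i) in H by (field; lra). exact H. }
    assert (Hs2 : s * (Rabs (v i) + 1) <= p0 i).
    { assert (s <= p0 i / (Rabs (v i) + 1)) by (eapply Rle_trans; [exact Hsd|apply Rmin_r]).
      apply (Rmult_le_compat_r (Rabs (v i) + 1)) in H; [|lra].
      replace (p0 i / (Rabs (v i) + 1) * (Rabs (v i) + 1)) with (p0 i) in H by (field; lra). exact H. }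
    split.
    - assert (- v i <= Rabs (v i)) by (rewrite <- Rabs_Ropp; apply Rle_abs). nra.
    - destruct (Req_dec (v i) 0) as [E|E].
      + rewrite E. replace ((p0 i + s * 0) / ps i) with (r i) by (unfold r; field; lra).
        rewrite Rabs_R0. lra.
      + set (e := s * v i / ps i).
        assert (Hae : Rabs e = s * Rabs (v i) / ps i).
        { unfold e, Rdiv. rewrite !Rabs_mult, Rabs_inv, (Rabs_right s), (Rabs_right (ps i)) by lra. auto. }
        assert (He0 : e <> 0).
        { unfold e. intro H0. apply E. apply (Rmult_eq_reg_l (s / ps i)).
          - replace (s / ps i * v i) with (s * v i / ps i) by (field; lra). lra.
          - apply Rgt_not_eq, Rdiv_lt_0_compat; lra. }
        assert (Hel : Rabs e < del).
        { rewrite Hae. apply (Rmult_lt_reg_r (ps i)); [lra|].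
          replace (s * Rabs (v i) / ps i * ps i) with (s * Rabs (v i)) by (field; lra). nra. }
        specialize (Hdel e He0 Hel).
        apply quot_bound in Hdel; auto.
        replace ((p0 i + s * v i) / ps i) with (r i + e) by (unfold r, e; field; lra).
        apply (Rmult_le_compat_l (ps i)) in Hdel; [|lra].
        rewrite Hae in Hdel.
        replace (ps i * (e * d i + eps * (s * Rabs (v i) / ps i))) with (s * (d i * v i) + eps * s * Rabs (v i)) in Hdel
          by (unfold e; field; lra).
        exact Hdel. }
  set (p := fun a => p0 a + t * v a).
  assert (Hmv : forall r', (r' <= k)%nat -> sumR n (fun a => m r' a * v a) = 0).
  { intros r' Hr'. rewrite (sumR_ext n _ (fun a => m r' a * x a - m r' a * p0 a)).
    - rewrite sumR_minus, HxL, HL by auto. ring.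
    - intros a Ha. rewrite Hxv by auto. ring. }
  assert (HpL : in_L n k m M p).
  { intros r' Hr'. unfold p. rewrite (sumR_ext n _ (fun a => m r' a * p0 a + t * (m r' a * v a))) by (intros; ring).
    rewrite sumR_plus, sumR_scal, Hmv, HL by auto. ring. }
  assert (HpS : in_simplex n p).
  { split.
    - intros i Hi. apply (HP i Hi t); lra.
    - unfold p. rewrite sumR_plus, sumR_scal, Hp01.
      rewrite (sumR_ext n v (fun a => m 0%nat a * v a)), Hmv by (lia || (intros; rewrite Hm0; auto; ring)). ring. }
  specialize (Hmin p HpL HpS). unfold Hdiv in Hmin.
  assert (Hle : sumR n (fun i => ps i * h (p i / ps i)) - sumR n (fun i => ps i * h (p0 i / ps i))
            <= t * D + (eps * t) * S).
  { rewrite <- sumR_minus. unfold D, S. rewrite <- !sumR_scal, <- sumR_plus. apply sumR_le.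
    intros i Hi. destruct (HP i Hi t Ht (Rle_refl _)) as [_ H]. unfold p, r in *. lra. }
  assert (Hes : eps * (S + 1) = - D / 2) by (unfold eps; field; lra).
  assert (eps * S < - D / 2) by nra.
  assert (t * D + eps * t * S < 0) by nra.
  lra.
Qed.

Theorem mainTheorem4
  (n : nat) (hn : (2 <= n)%nat)
  (ps : nat -> R) (hps : in_simplex n ps)
  (k : nat) (m : nat -> nat -> R) (M : nat -> R)
  (hm0 : forall j, (j < n)%nat -> m 0%nat j = 1) (hM0 : M 0%nat = 1)
  (hLne : exists p, in_L n k m M p /\ in_simplex n p)
  (p0 : nat -> R) (hp0L : in_L n k m M p0) (hp0S : in_simplex n p0) :
  (Q_cond n k m M ps p0 ->
     exists h : R -> R, strictly_convex_pos h /\ is_minimizer n k m M h ps p0)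
  /\
  ((exists h : R -> R, strictly_convex_pos h /\ differentiable_pos h /\
       is_minimizer n k m M h ps p0) ->
     Q_cond n k m M ps p0).
Proof.
  split.
  - intros HQ. apply forward; auto.
  - intros H. apply backward; auto.
Qed.
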